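(* Let $\mathbb{F}$ be a field and $n,d\ge 1$. Let $X^1,\dots,X^d$ be pairwise disjoint sets of $n^2$ variables each, $X^i=\{x^i_{jk}: j,k\in[n]\}$, and let $A^i$ be the $n\times n$ matrix with $(j,k)$ entry $x^i_{jk}$. Let $f\in\mathbb{F}[X^1\cup\dots\cup X^d]$ be the $(1,1)$ entry of the product $A^1A^2\cdots A^d$. Then any homogeneous $\Sigma\Pi\Sigma$ circuit computing the product of these $d$ matrices (i.e., computing the output polynomial $f$) has size $\Omega(n^{d-1}/2^d)$.
   Context: An arithmetic circuit over $\mathbb{F}$ is a directed acyclic graph whose in-degree-0 gates are labelled by variables or field constants and whose internal gates are plus or product gates; its size is its number of gates. A $\Sigma\Pi\Sigma$ circuit is a levelled depth-3 circuit with a single plus gate at the top, product gates at the middle level and plus gates at the bottom level, so it computes $\sum_{i=1}^k\prod_{j=1}^{\deg(P_i)} l_{i,j}$ with affine forms $l_{i,j}$; $k$ is the top fan-in. It is homogeneous if every bottom plus gate computes a homogeneous linear form. The paper studies the product of matrices through the single output polynomial given by the $(1,1)$ entry. *)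

(* Defs.v *)
From HB Require Import structures.
From mathcomp Require Import all_boot all_order all_algebra.
From mathcomp Require Import mpoly.
Set Implicit Arguments. Unset Strict Implicit. Unset Printing Implicit Defensive.
Import Order.TTheory GRing.Theory Num.Theory.
Local Open Scope ring_scope.

Definition varT (n d : nat) : finType := ('I_d * 'I_n * 'I_n)%type.
Definition nvars (n d : nat) : nat := #|{: varT n d}|.
Definition Poly (F : fieldType) (n d : nat) := {mpoly F[nvars n d]}.

Definition xvar (F : fieldType) (n d : nat) (i : 'I_d) (j k : 'I_n) : Poly F n d :=
  'X_(enum_rank ((i, j, k) : varT n d)).

Definition Amat (F : fieldType) (n d : nat) (i : 'I_d) : 'M[Poly F n d]_n :=
  \matrix_(j, k) xvar F i j k.

Definition matprod (R : pzRingType) (n : nat) (s : seq 'M[R]_n) : 'M[R]_n :=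
  foldr (fun A B => A *m B) 1%:M s.

(* (1,1) entry (0 for the empty 0x0 matrix, never used since n >= 1) *)
Definition entry11 (R : pzRingType) (n : nat) (M : 'M[R]_n) : R :=
  match n return 'M[R]_n -> R with
  | 0 => fun _ => 0
  | n'.+1 => fun M => M ord0 ord0
  end M.

Definition fpoly (F : fieldType) (n d : nat) : Poly F n d :=
  entry11 (matprod [seq Amat F n i | i <- enum 'I_d]).

(* A depth-3 Sigma-Pi-Sigma circuit over N variables, edges carrying field
   scalars:
   - nb bottom plus gates; bottom gate b computes the affine form
       sum_v coef b v * X_v + cst b
     (it has a wire from the input gate X_v iff coef b v != 0, and a wire
     from a constant input gate iff cst b != 0);
   - np product gates; product gate p multiplies the bottom gates listed
     (with multiplicity) in wires p;
   - one top plus gate computing sum_p topc p * (product gate p). *)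
Record SPS (F : fieldType) (N : nat) := mkSPS {
  nb : nat;
  coef : 'I_nb -> 'I_N -> F;
  cst : 'I_nb -> F;
  np : nat;
  wires : 'I_np -> seq 'I_nb;
  topc : 'I_np -> F
}.

Section Eval.
Variables (F : fieldType) (N : nat) (C : SPS F N).

Definition bottom_val (b : 'I_(nb C)) : {mpoly F[N]} :=
  \sum_(v < N) coef b v *: 'X_v + (cst b)%:MP.

Definition prod_val (p : 'I_(np C)) : {mpoly F[N]} :=
  \prod_(b <- wires p) bottom_val b.

Definition sps_output : {mpoly F[N]} :=
  \sum_(p < np C) topc p *: prod_val p.

Definition sps_homogeneous : Prop := forall b : 'I_(nb C), cst b = 0.

(* number of gates: variable input gates, constant input gates,
   bottom plus gates, product gates and the top plus gate *)
Definition sps_size : nat :=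
  #|[set v : 'I_N | [exists b : 'I_(nb C), coef b v != 0]]|
  + size (undup [seq cst b | b <- enum 'I_(nb C) & cst b != 0])
  + nb C + np C + 1.
End Eval.

(* Main.v *)
Require Import Defs.
From HB Require Import structures.
From mathcomp Require Import all_boot all_order all_algebra.
From mathcomp Require Import mpoly.
Set Implicit Arguments. Unset Strict Implicit. Unset Printing Implicit Defensive.
Import Order.TTheory GRing.Theory Num.Theory.
Local Open Scope ring_scope.

Section Gen.
Variables (F : fieldType) (N : nat).

Definition mask (S : pred 'I_N) (m : 'X_{1..N}) : 'X_{1..N} :=
  [multinom (if S v then m v else 0%N) | v < N].

Lemma maskE S m v : mask S m v = if S v then m v else 0%N.
Proof. by rewrite /mask mnmE. Qed.

Lemma maskD S m1 m2 : mask S (m1 + m2) = (mask S m1 + mask S m2)%MM.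
Proof. by apply/mnmP=> v; rewrite mnmDE !maskE mnmDE; case: (S v). Qed.

Lemma mask_idem S m : mask S (mask S m) = mask S m.
Proof. by apply/mnmP=> v; rewrite !maskE; case: (S v). Qed.

Lemma maskC0 S m : mask S (mask (predC S) m) = 0%MM.
Proof. by apply/mnmP=> v; rewrite !maskE mnm0E /=; case: (S v). Qed.

Lemma maskC0' S m : mask (predC S) (mask S m) = 0%MM.
Proof. by apply/mnmP=> v; rewrite !maskE mnm0E /=; case: (S v). Qed.

Lemma mask_split S m : (mask S m + mask (predC S) m)%MM = m.
Proof. by apply/mnmP=> v; rewrite mnmDE !maskE /=; case: (S v); rewrite ?addn0. Qed.

Definition H (S : pred 'I_N) (a : nat) (P : {mpoly F[N]}) :=
  forall m, P@_m != 0 -> (mdeg m == a) && (mask S m == m).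

Lemma H0 S a : H S a 0.
Proof. by move=> m; rewrite mcoeff0 eqxx. Qed.

Lemma HD S a P Q : H S a P -> H S a Q -> H S a (P + Q).
Proof.
move=> hP hQ m; rewrite mcoeffD.
have [P0|/hP //] := eqVneq P@_m 0.
by rewrite P0 add0r => /hQ.
Qed.

Lemma HZ S a c P : H S a P -> H S a (c *: P).
Proof.
move=> hP m; rewrite mcoeffZ; have [->|/hP//] := eqVneq P@_m 0.
by rewrite mulr0 eqxx.
Qed.

Lemma Hsum S a I (r : seq I) (Pp : I -> {mpoly F[N]}) :
  (forall i, H S a (Pp i)) -> H S a (\sum_(i <- r) Pp i).
Proof.
move=> h; elim: r => [|i r IH]; first by rewrite big_nil; exact: H0.
by rewrite big_cons; apply: HD.
Qed.

Lemma HM S a b P Q : H S a P -> H S b Q -> H S (a + b) (P * Q).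
Proof.
move=> hP hQ m; rewrite -mcoeff_msupp => /msuppM_le /allpairsP [[m1 m2] /= [h1 h2 ->]].
move: h1 h2; rewrite !mcoeff_msupp => /hP /andP [/eqP d1 /eqP k1] /hQ /andP [/eqP d2 /eqP k2].
by rewrite mdegD d1 d2 eqxx maskD k1 k2 eqxx.
Qed.

Lemma H1 S : H S 0 1.
Proof.
move=> m; rewrite mcoeff1; have [->|nz] := eqVneq m 0%MM; last by rewrite eqxx.
by rewrite mdeg0 eqxx /= => _; apply/eqP/mnmP => v; rewrite maskE mnm0E; case: (S v).
Qed.

Lemma HX (S : pred 'I_N) v : S v -> H S 1 'X_v.
Proof.
move=> Sv m; rewrite mcoeffX; have [<-|nz] := eqVneq U_(v)%MM m; last by rewrite eqxx.
rewrite mdeg1 eqxx /= => _; apply/eqP/mnmP => w; rewrite maskE mnm1E.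
by case: eqP => [<-|]; rewrite ?Sv //; case: (S w).
Qed.

Lemma H_deg S a P m : H S a P -> mdeg m != a -> P@_m = 0.
Proof.
move=> hP dm; apply/eqP; apply: contraNT dm => /hP /andP [] //.
Qed.

Lemma sum_supp (P : {mpoly F[N]}) x :
  \sum_(a <- msupp P) P@_a * (a == x)%:R = P@_x.
Proof.
rewrite {3}(mpolyE P) raddf_sum /=.
by apply: eq_bigr => a _; rewrite mcoeffZ mcoeffX.
Qed.

Lemma coefPQ S da db P Q x y : H S da P -> H (predC S) db Q ->
  (P * Q)@_(mask S x + mask (predC S) y) = P@_(mask S x) * Q@_(mask (predC S) y).
Proof.
move=> hP hQ.
rewrite {1}[P]mpolyE {1}[Q]mpolyE mulr_suml raddf_sum /=.
rewrite -(sum_supp P) mulr_suml; apply: eq_big_seq => a aP.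
rewrite -(sum_supp Q) !mulr_sumr raddf_sum /=; apply: eq_big_seq => b bQ.
rewrite -scalerAl -scalerAr scalerA -mpolyXD mcoeffZ mcoeffX.
move: aP bQ; rewrite !mcoeff_msupp => /hP /andP [_ /eqP ka] /hQ /andP [_ /eqP kb].
have -> : (a + b == mask S x + mask (predC S) y)%MM =
          (a == mask S x) && (b == mask (predC S) y).
  apply/eqP/andP => [e|[/eqP -> /eqP ->]] //.
  have e1 := congr1 (mask S) e; have e2 := congr1 (mask (predC S)) e.
  rewrite !maskD mask_idem maskC0 -kb maskC0 ka addm0 in e1.
  rewrite !maskD mask_idem maskC0' -ka maskC0' kb add0m in e2.
    by split; apply/eqP; rewrite ?e1 ?e2; apply/mnmP=> v; rewrite mnmDE mnm0E ?addn0.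
case: (a == _); case: (b == _); rewrite /= ?mulr1 ?mulr0 ?mul0r //.
Qed.

End Gen.

Section Spec.
Variables (F : fieldType) (n' d' : nat).
Local Notation n := n'.+1.
Local Notation d := d'.+1.
Local Notation NV := (nvars n d).
Local Notation MP := {mpoly F[NV]}.

Definition ev (i : 'I_d) (a c : 'I_n) : 'I_NV := enum_rank ((i, a, c) : varT n d).

Definition Sp (P : pred 'I_d) : pred 'I_NV := fun v => P (enum_val v).1.1.

Lemma Sp_ev P i a c : Sp P (ev i a c) = P i.
Proof. by rewrite /Sp /ev enum_rankK. Qed.

Lemma ev_eq i a c j b e : (ev i a c == ev j b e) = ((i == j) && (a == b) && (c == e)).
Proof. by rewrite (inj_eq enum_rank_inj). Qed.

Fixpoint mn (js : seq 'I_d) (w : seq 'I_n) : 'X_{1..NV} :=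
  match js, w with
  | i :: js', a :: ((c :: _) as w') => (U_(ev i a c) + mn js' w')%MM
  | _, _ => 0%MM
  end.

Fixpoint allseqs (L : nat) : seq (seq 'I_n) :=
  if L is L'.+1 then [seq c :: q | c <- enum 'I_n, q <- allseqs L'] else [:: [::]].

Lemma size_allseqs L : size (allseqs L) = (n ^ L)%N.
Proof.
elim: L => [//|L IH] /=; by rewrite size_allpairs size_enum_ord IH expnS.
Qed.

Lemma allseqs_size L q : q \in allseqs L -> size q = L.
Proof.
elim: L q => [|L IH] q /=; first by rewrite inE => /eqP ->.
by case/allpairsP => [[c r] [_ /IH <- ->]].
Qed.

Lemma allseqs_uniq L : uniq (allseqs L).
Proof.
elim: L => [//|L IH] /=; apply: allpairs_uniq => //; first exact: enum_uniq.
by move=> [c1 q1] [c2 q2] _ _ /= [-> ->].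
Qed.

Lemma Amat_prod i0 js a b :
  (foldr (fun A B => A *m B) 1%:M [seq Amat F n i | i <- i0 :: js]) a b =
  \sum_(q <- allseqs (size js)) 'X_[mn (i0 :: js) (a :: rcons q b)].
Proof.
elim: js i0 a => [|i1 js IH] i0 a /=.
  by rewrite mulmx1 big_seq1 /= addm0 mxE.
rewrite mxE big_allpairs_dep /= -big_enum /=.
apply: eq_bigr => c _.
rewrite -/(foldr _ _ [seq Amat F n i | i <- i1 :: js]) IH mulr_sumr.
by apply: eq_bigr => q _; rewrite mpolyXD mxE.
Qed.


Lemma maskU (S : pred 'I_NV) v : mask S U_(v)%MM = if S v then U_(v)%MM else 0%MM.
Proof.
apply/mnmP => w; rewrite maskE mnm1E; case: eqP => [<-|nvw].
  by case: (S v); rewrite ?mnm1E ?eqxx ?mnm0E.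
by case: (S w); case: (S v); rewrite ?mnm1E ?mnm0E //; case: eqP.
Qed.

Lemma mask_ext (S S' : pred 'I_NV) m : S =1 S' -> mask S m = mask S' m.
Proof. by move=> e; apply/mnmP => v; rewrite !maskE e. Qed.

Lemma mdeg_mask_mn P js w : size w = (size js).+1 ->
  mdeg (mask (Sp P) (mn js w)) = count P js.
Proof.
elim: js w => [|i js IH] [|a [|c w]] //=.
  by move=> _; apply/eqP; rewrite mdeg_eq0; apply/eqP/mnmP => v; rewrite maskE mnm0E; case: (Sp P v).
move=> [e]; rewrite maskD mdegD IH /= ?e // maskU Sp_ev.
by case: (P i); rewrite ?mdeg1 ?mdeg0.
Qed.

Lemma mn_coef js w i a c a0 : uniq js -> size w = (size js).+1 ->
  mn js w (ev i a c) =
  if i \in js then ((a == nth a0 w (index i js)) && (c == nth a0 w (index i js).+1) : nat)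
  else 0%N.
Proof.
elim: js w => [|j js IH] [|b [|e w]] //=; first by rewrite mnm0E.
move=> /andP [jn u] [sw]; rewrite mnmDE mnm1E ev_eq (IH _ u) /= ?sw // inE.
have [<-|nji] := eqVneq j i; rewrite ?eq_refl /=.
  rewrite (negbTE jn) addn0.
  by rewrite [b == a]eq_sym [e == c]eq_sym.
by rewrite add0n.
Qed.

Definition W (q : seq 'I_n) := ord0 :: rcons q ord0.
Definition pm (q : seq 'I_n) := mn (enum 'I_d) (W q).

Lemma pm_coef q i a c : size q = d' ->
  pm q (ev i a c) = ((a == nth ord0 (W q) i) && (c == nth ord0 (W q) i.+1) : nat).
Proof.
move=> sq; rewrite /pm (mn_coef _ _ _ ord0) ?enum_uniq ?mem_enum ?index_enum_ord //.
by rewrite /W /= size_rcons size_enum_ord sq.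
Qed.

Lemma W_nth q k : (k < size q)%N -> nth ord0 (W q) k.+1 = nth ord0 q k.
Proof. by move=> kq; rewrite /W /= nth_rcons kq. Qed.

Lemma pm_inj (b : bool) q t : size q = d' -> size t = d' ->
  mask (Sp (fun i => odd i == b)) (pm q) = mask (Sp (fun i => odd i == b)) (pm t) -> q = t.
Proof.
move=> sq st e.
have key (i : 'I_d) : odd i == b ->
    nth ord0 (W q) i = nth ord0 (W t) i /\ nth ord0 (W q) i.+1 = nth ord0 (W t) i.+1.
  move=> Pi; have := congr1 (fun m : 'X_{1..NV} => m (ev i (nth ord0 (W q) i) (nth ord0 (W q) i.+1))) e.
  rewrite /= !maskE !Sp_ev Pi !pm_coef // !eqxx /=.
  by case: eqP => // ->; case: eqP.
apply: (@eq_from_nth _ ord0) => [|k]; first by rewrite sq st.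
rewrite sq => kd.
have kd1 : (k.+1 < d)%N by [].
have kd2 : (k < d)%N by apply: ltnW.
case Ek: (odd k.+1 == b).
  have := key (inord k.+1); rewrite inordK // Ek => /(_ isT) [+ _].
  by rewrite !W_nth ?sq ?st.
have := key (inord k); rewrite inordK //.
have -> : (odd k == b) by move: Ek; rewrite oddS; move: (odd k) (b) => x y; case: x; case: y.
by move=> /(_ isT) [_]; rewrite !W_nth ?sq ?st.
Qed.

Definition Sodd := Sp (fun i => odd i == true).
Local Notation T := (allseqs d').
Local Notation K := (size T).
Definition tq (i : 'I_K) := nth [::] T i.
Definition Mt (i j : 'I_K) :=
  (mask Sodd (pm (tq i)) + mask (predC Sodd) (pm (tq j)))%MM.
Definition Phi (g : MP) : 'M[F]_K := \matrix_(i, j) g@_(Mt i j).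

Lemma tq_in i : tq i \in T.
Proof. by rewrite /tq mem_nth. Qed.

Lemma tq_size i : size (tq i) = d'.
Proof. exact: allseqs_size (tq_in i). Qed.

Lemma fpolyE : fpoly F n d = \sum_(q <- T) 'X_[pm q].
Proof.
have [i0 [js [E sj]]] : exists i0 js, enum 'I_d = i0 :: js /\ size js = d'.
  move: (size_enum_ord d); case: (enum 'I_d) => [//|i0 js] [sj].
  by exists i0, js.
rewrite /fpoly /entry11 /matprod /pm E Amat_prod sj.
by apply: eq_bigr.
Qed.

Lemma maskC_even m : mask (predC Sodd) m = mask (Sp (fun i => odd i == false)) m.
Proof. by apply: mask_ext => v; rewrite /= /Sodd /Sp; case: (odd _). Qed.

Lemma pm_Mt q i j : size q = d' ->
  (pm q == Mt i j) = (q == tq i) && (q == tq j).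
Proof.
move=> sq; apply/eqP/andP => [e|[/eqP -> /eqP e]].
  have e1 := congr1 (mask Sodd) e; have e2 := congr1 (mask (predC Sodd)) e.
  rewrite /Mt maskD mask_idem maskC0 addm0 in e1.
  rewrite /Mt maskD mask_idem maskC0' add0m !maskC_even in e2.
  split; apply/eqP.
    exact: (@pm_inj true) (tq_size i) e1.
  exact: (@pm_inj false) (tq_size j) e2.
by rewrite /Mt -{1}e mask_split.
Qed.

Lemma Phi_f : Phi (fpoly F n d) = 1%:M.
Proof.
apply/matrixP => i j; rewrite !mxE fpolyE raddf_sum /=.
rewrite (bigD1_seq (tq i)) ?tq_in ?allseqs_uniq //= big1_seq; last first.
  move=> q /andP [nq qT]; rewrite mcoeffX pm_Mt ?(allseqs_size qT) //.
  by rewrite (negbTE nq).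
rewrite mcoeffX pm_Mt ?tq_size // eqxx /= addr0 /tq nth_uniq ?allseqs_uniq //.
Qed.

Lemma Phi_sum I (r : seq I) (G : I -> MP) :
  Phi (\sum_(x <- r) G x) = \sum_(x <- r) Phi (G x).
Proof.
apply/matrixP => i j; rewrite mxE raddf_sum summxE; apply: eq_bigr => x _.
by rewrite mxE.
Qed.

Lemma Phi_scale c g : Phi (c *: g) = c *: Phi g.
Proof. by apply/matrixP => i j; rewrite !mxE mcoeffZ. Qed.

Lemma rank_sum I (r : seq I) (A : I -> 'M[F]_K) :
  (\rank ((\sum_(x <- r) A x)%R) <= \sum_(x <- r) \rank (A x))%N.
Proof.
elim: r => [|x r IH]; first by rewrite !big_nil mxrank0.
rewrite !big_cons; apply: leq_trans (mxrank_add _ _) _.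
by rewrite leq_add2l.
Qed.

Lemma mdeg_Sodd q : size q = d' ->
  mdeg (mask Sodd (pm q)) = count (fun i : 'I_d => odd i == true) (enum 'I_d).
Proof.
by move=> sq; rewrite /pm mdeg_mask_mn // /W /= size_rcons size_enum_ord sq.
Qed.

Lemma mdeg_Seven q : size q = d' ->
  mdeg (mask (predC Sodd) (pm q)) = count (fun i : 'I_d => odd i == false) (enum 'I_d).
Proof.
by move=> sq; rewrite maskC_even /pm mdeg_mask_mn // /W /= size_rcons size_enum_ord sq.
Qed.

Lemma count_parity :
  (count (fun i : 'I_d => odd i == true) (enum 'I_d) +
   count (fun i : 'I_d => odd i == false) (enum 'I_d))%N = d.
Proof.
transitivity (size (enum 'I_d)); last exact: size_enum_ord.
rewrite -(count_predC (fun i : 'I_d => odd i == true)); congr (_ + _)%N.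
by apply: eq_count => i /=; case: (odd i).
Qed.

Lemma Phi_PQ a b P Q : H Sodd a P -> H (predC Sodd) b Q ->
  Phi (P * Q) =
  (\col_i P@_(mask Sodd (pm (tq i)))) *m (\row_j Q@_(mask (predC Sodd) (pm (tq j)))).
Proof.
move=> hP hQ; apply/matrixP => i j; rewrite !mxE big_ord1 !mxE.
exact: coefPQ hP hQ.
Qed.

Lemma Phi_PQ_rank a b P Q : H Sodd a P -> H (predC Sodd) b Q ->
  (\rank (Phi (P * Q)) <= ((a + b)%N == d))%N.
Proof.
move=> hP hQ; have [abd|abd] := eqVneq (a + b)%N d.
  rewrite (Phi_PQ hP hQ) /=; apply: leq_trans (mxrankM_maxl _ _) _.
  exact: rank_leq_col.
suff -> : Phi (P * Q) = 0 by rewrite mxrank0.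
apply/matrixP => i j; rewrite (Phi_PQ hP hQ) !mxE big_ord1 !mxE.
have [ea|ea] := eqVneq a (count (fun i : 'I_d => odd i == true) (enum 'I_d)).
  rewrite (H_deg (m := mask (predC Sodd) (pm (tq j))) hQ) ?mulr0 //.
  rewrite mdeg_Seven ?tq_size //; apply/eqP => eb; move/eqP: abd; apply.
  by rewrite ea -eb count_parity.
by rewrite (H_deg (m := mask Sodd (pm (tq i))) hP) ?mul0r // mdeg_Sodd ?tq_size // eq_sym.
Qed.

Section Circ.
Variable C : SPS F NV.
Hypothesis hom : sps_homogeneous C.

Definition yb (b : 'I_(nb C)) : MP :=
  \sum_(v < NV) (if Sodd v then coef b v else 0) *: 'X_v.
Definition zb (b : 'I_(nb C)) : MP :=
  \sum_(v < NV) (if Sodd v then 0 else coef b v) *: 'X_v.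

Lemma bottom_split b : bottom_val b = yb b + zb b.
Proof.
rewrite /bottom_val hom mpolyC0 addr0 /yb /zb -big_split /=.
by apply: eq_bigr => v _; rewrite -scalerDl; case: (Sodd v); rewrite ?addr0 ?add0r.
Qed.

Lemma Hyb b : H Sodd 1 (yb b).
Proof.
apply: Hsum => v; case Sv: (Sodd v); last by rewrite scale0r; exact: H0.
by apply: HZ; apply: HX.
Qed.

Lemma Hzb b : H (predC Sodd) 1 (zb b).
Proof.
apply: Hsum => v; case Sv: (Sodd v); first by rewrite scale0r; exact: H0.
by apply: HZ; apply: HX; rewrite /= Sv.
Qed.

Lemma dec (s : seq 'I_(nb C)) : exists L : seq (MP * MP * nat),
  [/\ size L = (2 ^ size s)%N,
      \prod_(b <- s) bottom_val b = \sum_(x <- L) x.1.1 * x.1.2 &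
      forall x, x \in L -> [/\ (x.2 <= size s)%N, H Sodd x.2 x.1.1 &
                               H (predC Sodd) (size s - x.2) x.1.2]].
Proof.
elim: s => [|b s [L [sL eL hL]]].
  exists [:: (1, 1, 0%N)]; split => //; first by rewrite big_nil big_seq1 mulr1.
  by move=> x; rewrite inE => /eqP -> /=; split => //; apply: H1.
exists ([seq (yb b * x.1.1, x.1.2, x.2.+1) | x <- L] ++
        [seq (x.1.1, zb b * x.1.2, x.2) | x <- L]); split.
- by rewrite size_cat !size_map sL /= expnS mul2n addnn.
- rewrite big_cons eL bottom_split mulrDl !mulr_sumr big_cat !big_map /=.
  congr (_ + _); apply: eq_bigr => x _.
    by rewrite mulrA.
  by rewrite mulrCA.
- move=> x; rewrite mem_cat => /orP [] /mapP [y yL ->] /=;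
    have [y2 hy1 hy2] := hL y yL.
    split => //; have := HM (@Hyb b) hy1; by rewrite add1n.
  split; first by apply: leqW.
    by [].
  rewrite subSn //; have := HM (@Hzb b) hy2; by rewrite add1n.
Qed.

Lemma prod_rank p : (\rank (Phi (@prod_val _ _ C p)) <= 2 ^ d)%N.
Proof.
have [L [sL eL hL]] := dec (wires p).
rewrite /prod_val eL Phi_sum; apply: leq_trans (rank_sum _ _) _.
have [sd|sd] := eqVneq (size (wires p)) d.
  apply: (@leq_trans (\sum_(x <- L) 1)%N); last by rewrite sum1_size sL sd.
  rewrite big_seq_cond [X in (_ <= X)%N]big_seq_cond.
  apply: leq_sum => x /andP [xL _].
  have [x2 hx1 hx2] := hL x xL; apply: leq_trans (Phi_PQ_rank hx1 hx2) _.
  by case: (_ == _).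
rewrite big1_seq //= => x xL.
have [x2 hx1 hx2] := hL x xL; apply/eqP; rewrite -leqn0.
apply: leq_trans (Phi_PQ_rank hx1 hx2) _.
by rewrite subnKC // (negbTE sd).
Qed.

Lemma output_rank : (\rank (Phi (sps_output C)) <= np C * 2 ^ d)%N.
Proof.
rewrite /sps_output Phi_sum; apply: leq_trans (rank_sum _ _) _.
apply: (@leq_trans (\sum_(p < np C) 2 ^ d)%N); last by rewrite sum_nat_const card_ord.
apply: leq_sum => p _.
by rewrite Phi_scale; apply: leq_trans (mxrank_scale _ _) (prod_rank p).
Qed.

End Circ.

Lemma main_bound (C : SPS F NV) : sps_homogeneous C -> sps_output C = fpoly F n d ->
  (n ^ d' <= np C * 2 ^ d)%N.
Proof.
move=> hom e; have := output_rank hom; rewrite e Phi_f mxrank1 size_allseqs //.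
Qed.

End Spec.

Theorem theorem5 :
  exists c : rat, 0 < c /\
    forall (F : fieldType) (n d : nat), (1 <= n)%N -> (1 <= d)%N ->
    forall C : SPS F (nvars n d),
      sps_homogeneous C -> sps_output C = fpoly F n d ->
      c * (n ^ d.-1)%:R / (2 ^ d)%:R <= (sps_size C)%:R.
Proof.
exists 1; split => //.
move=> F [//|n'] [//|d'] _ _ C hom e.
have hb := @main_bound F n' d' C hom e.
have hs : (np C <= sps_size C)%N.
  by rewrite /sps_size addn1 ltnW // ltnS leq_addl.
rewrite mul1r ler_pdivrMr ?ltr0n ?expn_gt0 // -natrM ler_nat /=.
apply: leq_trans hb _; exact: leq_mul hs (leqnn _).
Qed.
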